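(* Let $B\in\mathbb R^{n\times m}$, let $\mathcal I_{\mathcal V}$ be a symmetric positive definite $m\times m$ matrix, and let $f:\mathbb R^m\to\mathbb R$ be differentiable with $f\in\mathcal S^{1,1}_{\mu_{f,\mathcal I_{\mathcal V}},L_{f,\mathcal I_{\mathcal V}}}$ with respect to $\mathcal I_{\mathcal V}$. For $u_1,u_2\in\mathbb R^m$ and $p_1,p_2\in\mathbb R^n$ set $v_i=u_i+\mathcal I_{\mathcal V}^{-1}B^\top p_i$. Then $$\big(\nabla f(u_1)-\nabla f(u_2),\ \mathcal I_{\mathcal V}^{-1}B^\top(p_1-p_2)\big)\ \ge\ \frac{\mu_{f,\mathcal I_{\mathcal V}}}{2}\|v_1-v_2\|^2_{\mathcal I_{\mathcal V}}-\frac{L_{f,\mathcal I_{\mathcal V}}}{2}\|B^\top(p_1-p_2)\|^2_{\mathcal I_{\mathcal V}^{-1}}-\frac12\big(\nabla f(u_1)-\nabla f(u_2),u_1-u_2\big).$$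
   Context: For a symmetric positive definite matrix $M$, $\|x\|_M=(Mx,x)^{1/2}$. The Bregman divergence is $D_f(y,x)=f(y)-f(x)-(\nabla f(x),y-x)$, and $f\in\mathcal S^{1,1}_{\mu_{f,M},L_{f,M}}$ with respect to $M$ means $\frac{\mu_{f,M}}{2}\|x-y\|_M^2\le D_f(y,x)\le\frac{L_{f,M}}{2}\|x-y\|_M^2$ for all $x,y$ (with $\mu_{f,M}\ge0$). *)

(* Defs.v *)
From HB Require Import structures.
From mathcomp Require Import all_boot all_order all_algebra.
From mathcomp Require Import all_classical all_reals all_analysis.
Set Implicit Arguments. Unset Strict Implicit. Unset Printing Implicit Defensive.
Import Order.TTheory GRing.Theory Num.Theory.
Import numFieldNormedType.Exports.
Local Open Scope ring_scope.

Definition dotp {R : realType} {k : nat} (x y : 'cV[R]_k) : R :=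
  \sum_(i < k) x i 0 * y i 0.

Definition spd {R : realType} {k : nat} (M : 'M[R]_k) : Prop :=
  M^T = M /\ (forall x : 'cV[R]_k, x != 0 -> 0 < dotp (M *m x) x).

Definition normM {R : realType} {k : nat} (M : 'M[R]_k) (x : 'cV[R]_k) : R :=
  Num.sqrt (dotp (M *m x) x).

Definition grad {R : realType} {k : nat} (f : 'cV[R]_k -> R) (x : 'cV[R]_k)
  : 'cV[R]_k := \col_i ('d f x (delta_mx i 0 : 'cV[R]_k)).

Definition bregman {R : realType} {k : nat} (f : 'cV[R]_k -> R)
  (y x : 'cV[R]_k) : R := f y - f x - dotp (grad f x) (y - x).

Definition S11 {R : realType} {k : nat} (M : 'M[R]_k) (mu L : R)
  (f : 'cV[R]_k -> R) : Prop :=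
  0 <= mu /\
  forall x y : 'cV[R]_k,
    mu / 2 * normM M (x - y) ^+ 2 <= bregman f y x /\
    bregman f y x <= L / 2 * normM M (x - y) ^+ 2.

(* Main.v *)
Require Import Defs.
From HB Require Import structures.
From mathcomp Require Import all_boot all_order all_algebra.
From mathcomp Require Import all_classical all_reals all_analysis.
From mathcomp Require Import ring lra.
Import Order.TTheory GRing.Theory Num.Theory.
Import numFieldNormedType.Exports.
Local Open Scope ring_scope.

Section H.
Variable R : realType.
Variable k : nat.
Implicit Types x y z a b c e : 'cV[R]_k.

Lemma dotpE x y : dotp x y = (x^T *m y) 0 0.
Proof. by rewrite /dotp mxE; apply: eq_bigr => i _; rewrite mxE. Qed.

Lemma dotpC x y : dotp x y = dotp y x.
Proof. by rewrite /dotp; apply: eq_bigr => i _; rewrite mulrC. Qed.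

Lemma dotpDl x y z : dotp (x + y) z = dotp x z + dotp y z.
Proof. by rewrite /dotp -big_split; apply: eq_bigr => i _; rewrite !mxE mulrDl. Qed.

Lemma dotpNl x y : dotp (- x) y = - dotp x y.
Proof. by rewrite /dotp -sumrN; apply: eq_bigr => i _; rewrite !mxE mulNr. Qed.

Lemma dotpDr x y z : dotp z (x + y) = dotp z x + dotp z y.
Proof. by rewrite dotpC dotpDl !(dotpC z). Qed.

Lemma dotpNr x y : dotp y (- x) = - dotp y x.
Proof. by rewrite dotpC dotpNl dotpC. Qed.

Lemma dotp0l y : dotp 0 y = 0.
Proof. by rewrite /dotp big1 // => i _; rewrite mxE mul0r. Qed.

Lemma dotp_mul (M : 'M[R]_k) x y : dotp (M *m x) y = dotp x (M^T *m y).
Proof. by rewrite !dotpE trmx_mul mulmxA. Qed.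

Lemma spd_ge0 (M : 'M[R]_k) x : spd M -> 0 <= dotp (M *m x) x.
Proof.
move=> [_ hM]; have [->|nz] := eqVneq x 0.
  by rewrite mulmx0 dotp0l.
exact: ltW (hM x nz).
Qed.

Lemma spd_unit (M : 'M[R]_k) : spd M -> M \in unitmx.
Proof.
move=> [hT hM]; rewrite unitmxE unitfE; apply/negP => /det0P [v nz hv].
have nz' : v^T != 0 by apply: contra nz => /eqP h; rewrite -(trmxK v) h trmx0.
have := hM _ nz'.
have -> : M *m v^T = 0 by rewrite -hT -trmx_mul hv trmx0.
by rewrite dotp0l ltxx.
Qed.

Lemma normM2 (M : 'M[R]_k) x : spd M -> normM M x ^+ 2 = dotp (M *m x) x.
Proof. by move=> h; rewrite /normM sqr_sqrtr // spd_ge0. Qed.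

Lemma normMN (M : 'M[R]_k) x : normM M (- x) = normM M x.
Proof. by rewrite /normM mulmxN dotpNl dotpNr opprK. Qed.

Lemma inv_ge0 (M : 'M[R]_k) y : spd M -> M \in unitmx ->
  0 <= dotp (invmx M *m y) y.
Proof.
move=> hM hU.
have hy : y = M *m (invmx M *m y) by rewrite mulmxA mulmxV // mul1mx.
set z := invmx M *m y in hy *.
by rewrite hy dotpC spd_ge0.
Qed.

Lemma inv_eq (M : 'M[R]_k) y : spd M -> M \in unitmx ->
  dotp (invmx M *m y) y = dotp (M *m (invmx M *m y)) (invmx M *m y).
Proof.
move=> hM hU; by rewrite mulmxA mulmxV // mul1mx dotpC.
Qed.
Lemma meq1 a b c : b - (a + c) = - ((a - b) + c).
Proof. by apply/matrixP => i j; rewrite !mxE; ring. Qed.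
Lemma meq2 a c : a - (a + c) = - c.
Proof. by apply/matrixP => i j; rewrite !mxE; ring. Qed.
Lemma meq3 a b c : a - (b - c) = (a - b) + c.
Proof. by apply/matrixP => i j; rewrite !mxE; ring. Qed.
Lemma meq4 b c : b - (b - c) = c.
Proof. by apply/matrixP => i j; rewrite !mxE; ring. Qed.
Lemma meq5 a b c : a + c - b = (a - b) + c.
Proof. by apply/matrixP => i j; rewrite !mxE; ring. Qed.
Lemma meq6 a c : a + c - a = c.
Proof. by apply/matrixP => i j; rewrite !mxE; ring. Qed.
Lemma meq7 a b c : b - c - a = - ((a - b) + c).
Proof. by apply/matrixP => i j; rewrite !mxE; ring. Qed.
Lemma meq8 b c : b - c - b = - c.
Proof. by apply/matrixP => i j; rewrite !mxE; ring. Qed.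
Lemma meq9 a b c e : (a + c) - (b + e) = (a - b) + (c - e).
Proof. by apply/matrixP => i j; rewrite !mxE; ring. Qed.
End H.

Lemma fin_ineq (R : realFieldType) (mu L N1 N2 fz fz' f1 f2 a b c e : R) :
  mu / 2 * N1 <= fz - f2 - (c + e) -> fz - f1 - b <= L / 2 * N2 ->
  mu / 2 * N1 <= fz' - f1 - - (a + b) -> fz' - f2 - - e <= L / 2 * N2 ->
  mu / 2 * N1 - L / 2 * N2 - 1 / 2 * (a - c) <= b - e.
Proof. move=> h1 h2 h3 h4; lra. Qed.

Theorem lemma3p1 (R : realType) (n m : nat) (B : 'M[R]_(n, m)) (IV : 'M[R]_m)
  (f : 'cV[R]_m -> R) (mu L : R)
  (hIV : spd IV)
  (hdiff : forall x : 'cV[R]_m, differentiable f x)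
  (hf : S11 IV mu L f)
  (u1 u2 : 'cV[R]_m) (p1 p2 : 'cV[R]_n) :
  let v1 := u1 + invmx IV *m B^T *m p1 in
  let v2 := u2 + invmx IV *m B^T *m p2 in
  mu / 2 * normM IV (v1 - v2) ^+ 2
    - L / 2 * normM (invmx IV) (B^T *m (p1 - p2)) ^+ 2
    - 1 / 2 * dotp (grad f u1 - grad f u2) (u1 - u2)
  <= dotp (grad f u1 - grad f u2) (invmx IV *m B^T *m (p1 - p2)).
Proof.
cbv zeta.
set v1 := u1 + _ *m p1.
set v2 := u2 + _ *m p2.
set w := invmx IV *m B^T *m (p1 - p2).
set q := B^T *m (p1 - p2).
set d := u1 - u2.
have hU : IV \in unitmx by exact: spd_unit.
have hw : w = invmx IV *m q by rewrite /w /q mulmxA.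
have hq : normM (invmx IV) q ^+ 2 = normM IV w ^+ 2.
  rewrite (@normM2 R m IV w hIV) {1}/normM sqr_sqrtr; last first.
    exact: inv_ge0.
  by rewrite hw inv_eq.
have hv : v1 - v2 = d + w.
  by rewrite /v1 /v2 meq9 -mulmxBr.
rewrite hq hv.
have e1 : u2 - (u1 + w) = - (d + w) by rewrite meq1.
have e2 : u1 - (u1 + w) = - w by rewrite meq2.
have e3 : u1 - (u2 - w) = d + w by rewrite meq3.
have e4 : u2 - (u2 - w) = w by rewrite meq4.
have f1 : u1 + w - u2 = d + w by rewrite meq5.
have f2 : u1 + w - u1 = w by rewrite meq6.
have f3 : u2 - w - u1 = - (d + w) by rewrite meq7.
have f4 : u2 - w - u2 = - w by rewrite meq8.
case: hf => _ hf.
have [h1 _] := hf u2 (u1 + w).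
have [_ h2] := hf u1 (u1 + w).
have [h3 _] := hf u1 (u2 - w).
have [_ h4] := hf u2 (u2 - w).
rewrite /bregman in h1 h2 h3 h4.
rewrite e1 normMN f1 in h1.
rewrite e2 normMN f2 in h2.
rewrite e3 f3 in h3.
rewrite e4 f4 in h4.
set g1 := grad f u1 in h1 h2 h3 h4 *.
set g2 := grad f u2 in h1 h2 h3 h4 *.
clearbody g1 g2 w d.
rewrite !(dotpDr, dotpNr) in h1 h2 h3 h4.
rewrite !(dotpDl, dotpNl).
exact: fin_ineq h1 h2 h3 h4.
Qed.
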